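(* Let $n\ge 2$ and let $A_1,\dots,A_{2n}$ be the vertices $\pm\mathbf e_1,\dots,\pm\mathbf e_n$ of the cross-polytope in $\mathbb R^n$ (where $\mathbf e_1,\dots,\mathbf e_n$ is the standard basis). Let $\Gamma$ be the sphere of radius $r>0$ centred at the origin $O$, let $E=\{\pm r\mathbf e_i: 1\le i\le n\}$ (the points where the rays $OA_j$ meet $\Gamma$) and $D=\{\tfrac{r}{\sqrt n}(\varepsilon_1,\dots,\varepsilon_n):\varepsilon_j\in\{1,-1\}\}$ (the points where the perpendiculars from $O$ to the facets of the cross-polytope meet $\Gamma$). Fix $h\ge0$ and put $C_n(M,\lambda)=\sum_{i=1}^{2n}(|MA_i|^2+h)^{\lambda/2}$ for $M\in\Gamma$. Then: (1) If $\lambda<0$: the minimum of $C_n(\cdot,\lambda)$ on $\Gamma$ is attained precisely at the points of $D$, and, unless $h=0$ and $r=1$ (in which case $C_n(\cdot,\lambda)$ is unbounded), the maximum is attained precisely at the points of $E$. (2) If $\lambda\in\{0,2,4,6\}$, $C_n(M,\lambda)$ is independent of $M\in\Gamma$; these are the only real $\lambda$ with this property. If $\lambda\in(0,2)\cup(4,6)$, the maximum is attained precisely at the points of $D$ and the minimum precisely at the points of $E$. If $\lambda\in(2,4)$, the minimum is attained precisely at the points of $D$ and the maximum precisely at the points of $E$. (3) If $\lambda>6$: the maximum is attained precisely at the points of $E$ and the minimum precisely at the points of $D$.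
   Context: $|MA|$ denotes Euclidean distance. *)

(* Defs.v *)
(* classical reals. Points of R^n are functions nat -> R,
   of which only the coordinates 0..n-1 matter. *)
From Stdlib Require Import Reals.
Open Scope R_scope.

Fixpoint rsum (n : nat) (f : nat -> R) : R :=
  match n with
  | O => 0
  | S k => rsum k f + f k
  end.

Definition pt := nat -> R.

Definition pt_eq (n : nat) (M N : pt) : Prop :=
  forall i, (i < n)%nat -> M i = N i.

Definition dist2 (n : nat) (M A : pt) : R :=
  rsum n (fun i => (M i - A i) ^ 2).

Definition on_sphere (n : nat) (r : R) (M : pt) : Prop :=
  rsum n (fun i => M i ^ 2) = r ^ 2.

Definition vertex (j : nat) (s : R) : pt :=
  fun i => if Nat.eq_dec i j then s else 0.

Definition is_sign (s : R) : Prop := s = 1 \/ s = -1.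

(* real power x^y for x >= 0: Rpower for x > 0; 0^y = 0 for y > 0,
   0^0 = 1.  (0^y for y < 0 is +infinity; it never gets used, see
   C_finite below.) *)
Definition rpow (x y : R) : R :=
  if Rlt_dec 0 x then Rpower x y
  else if Req_EM_T y 0 then 1 else 0.

Definition Cn (n : nat) (h lam : R) (M : pt) : R :=
  rsum n (fun j => rpow (dist2 n M (vertex j 1) + h) (lam / 2)
                 + rpow (dist2 n M (vertex j (-1)) + h) (lam / 2)).

(* C_n(M, lambda) is a finite real number (false exactly when lambda < 0
   and some base |MA_i|^2 + h vanishes, where C_n(M,lambda) = +infinity) *)
Definition C_finite (n : nat) (h lam : R) (M : pt) : Prop :=
  0 <= lam \/
  forall j s, (j < n)%nat -> is_sign s -> 0 < dist2 n M (vertex j s) + h.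

Definition inE (n : nat) (r : R) (M : pt) : Prop :=
  exists j s, (j < n)%nat /\ is_sign s /\ pt_eq n M (fun i => r * vertex j s i).

Definition inD (n : nat) (r : R) (M : pt) : Prop :=
  exists eps : nat -> R, (forall i, (i < n)%nat -> is_sign (eps i)) /\
    pt_eq n M (fun i => r / sqrt (INR n) * eps i).

(* The minimum of C_n(.,lam) on Gamma is attained precisely at the points of S
   (points with C = +infinity are trivially not minimizers). *)
Definition min_exactly_at (n : nat) (r h lam : R) (S : pt -> Prop) : Prop :=
  forall M, S M ->
    C_finite n h lam M /\
    forall N, on_sphere n r N -> C_finite n h lam N ->
      Cn n h lam M <= Cn n h lam N /\ (~ S N -> Cn n h lam M < Cn n h lam N).

Definition max_exactly_at (n : nat) (r h lam : R) (S : pt -> Prop) : Prop :=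
  (forall N, on_sphere n r N -> C_finite n h lam N) /\
  forall M, S M ->
    forall N, on_sphere n r N ->
      Cn n h lam N <= Cn n h lam M /\ (~ S N -> Cn n h lam N < Cn n h lam M).

Definition constant_on_sphere (n : nat) (r h lam : R) : Prop :=
  forall M N, on_sphere n r M -> on_sphere n r N ->
    C_finite n h lam M -> C_finite n h lam N -> Cn n h lam M = Cn n h lam N.

(* Main.v *)
Require Import Defs.
From Stdlib Require Import Reals Lra Lia.
Open Scope R_scope.

Lemma pow_diff_sign A B e : 0 < B -> B < A -> e <> 0 -> 0 < e * (Rpower A e - Rpower B e).
Proof.
  intros HB HBA He. unfold Rpower.
  assert (Hl : ln B < ln A) by (apply ln_increasing; lra).
  destruct (Rlt_or_le 0 e) as [Hp|Hn].
  - apply Rmult_lt_0_compat; auto. apply Rlt_0_minus. apply exp_increasing. nra.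
  - assert (e < 0) by lra.
    assert (exp (e * ln A) < exp (e * ln B)) by (apply exp_increasing; nra). nra.
Qed.

Lemma dpl_loc (f g : R -> R) x l d : 0 < d -> (forall y, Rabs (y - x) < d -> f y = g y) ->
  derivable_pt_lim g x l -> derivable_pt_lim f x l.
Proof.
  intros Hd Heq H eps Heps. destruct (H eps Heps) as [del Hdel].
  assert (Hm : 0 < Rmin del d) by (apply Rmin_pos; [apply (cond_pos del)|lra]).
  exists (mkposreal _ Hm). intros hh Hh Hhd. simpl in Hhd.
  rewrite (Heq (x + hh)), (Heq x).
  apply Hdel; auto. apply Rlt_le_trans with (1:=Hhd). apply Rmin_l.
  replace (x - x) with 0 by ring. rewrite Rabs_R0. lra.
  replace (x + hh - x) with hh by ring. apply Rlt_le_trans with (1:=Hhd). apply Rmin_r.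
Qed.

Lemma rpow_pos u m : 0 < u -> rpow u m = Rpower u m.
Proof. intros. unfold rpow. destruct (Rlt_dec 0 u); [auto|lra]. Qed.

Lemma dpl_rpow u m : 0 < u -> derivable_pt_lim (fun y => rpow y m) u (m * Rpower u (m - 1)).
Proof.
  intros Hu. apply dpl_loc with (g := fun y => Rpower y m) (d := u); auto.
  intros y Hy. apply rpow_pos. apply Rabs_def2 in Hy. lra.
  apply derivable_pt_lim_power; auto.
Qed.

Lemma cont_rpow0 m : 0 < m -> continuity_pt (fun y => rpow y m) 0.
Proof.
  intros Hm eps Heps. unfold rpow at 2. destruct (Rlt_dec 0 0); [lra|].
  destruct (Req_EM_T m 0); [lra|].
  exists (Rpower eps (/ m)). split. unfold Rpower; apply exp_pos.
  intros x [_ Hx]. simpl in Hx. unfold R_dist in *. rewrite Rminus_0_r in Hx.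
  unfold rpow. destruct (Rlt_dec 0 x).
  - simpl. unfold R_dist. rewrite Rminus_0_r. rewrite Rabs_pos_eq by (unfold Rpower; left; apply exp_pos).
    rewrite Rabs_pos_eq in Hx by lra.
    replace eps with (Rpower (Rpower eps (/m)) m).
    apply Rlt_Rpower_l; auto. rewrite Rpower_mult. rewrite Rinv_l by lra.
    apply Rpower_1; auto.
  - destruct (Req_EM_T m 0); [lra|]. simpl. unfold R_dist. rewrite Rminus_0_r, Rabs_R0; auto.
Qed.

Lemma cmvt (f f' g g' : R -> R) x1 x2 : x1 < x2 ->
  (forall c, x1 < c < x2 -> derivable_pt_lim f c (f' c)) ->
  (forall c, x1 < c < x2 -> derivable_pt_lim g c (g' c)) ->
  continuity_pt f x1 -> continuity_pt f x2 ->
  continuity_pt g x1 -> continuity_pt g x2 ->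
  exists c, x1 < c < x2 /\ (g x2 - g x1) * f' c = (f x2 - f x1) * g' c.
Proof.
  intros H12 Hf Hg Cf1 Cf2 Cg1 Cg2.
  set (pr1 := fun c (H : x1 < c < x2) => exist _ (f' c) (Hf c H) : derivable_pt f c).
  set (pr2 := fun c (H : x1 < c < x2) => exist _ (g' c) (Hg c H) : derivable_pt g c).
  destruct (MVT f g x1 x2 pr1 pr2 H12) as [c [P Hc]].
  - intros c [Hc1 Hc2]. destruct Hc1 as [Hc1|Hc1]; [|subst; auto].
    destruct Hc2 as [Hc2|Hc2]; [|subst; auto]. apply derivable_continuous_pt. apply pr1. lra.
  - intros c [Hc1 Hc2]. destruct Hc1 as [Hc1|Hc1]; [|subst; auto].
    destruct Hc2 as [Hc2|Hc2]; [|subst; auto]. apply derivable_continuous_pt. apply pr2. lra.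
  - exists c. split; [exact P|exact Hc].
Qed.

Lemma mvt1 (f f' : R -> R) x1 x2 : x1 < x2 ->
  (forall c, x1 < c < x2 -> derivable_pt_lim f c (f' c)) ->
  continuity_pt f x1 -> continuity_pt f x2 ->
  exists c, x1 < c < x2 /\ f x2 - f x1 = f' c * (x2 - x1).
Proof.
  intros H12 Hf C1 C2.
  destruct (cmvt f f' id (fun _ => 1) x1 x2 H12 Hf) as [c [Hc E]]; auto.
  - intros; apply derivable_pt_lim_id.
  - apply derivable_continuous_pt, derivable_pt_id.
  - apply derivable_continuous_pt, derivable_pt_id.
  - exists c; split; auto. unfold id in E. lra.
Qed.

Lemma dpl_lin a c x : derivable_pt_lim (fun y => a + c * y) x c.
Proof.
  intros eps Heps. exists (mkposreal 1 Rlt_0_1). intros hh Hh _.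
  replace ((a + c * (x + hh) - (a + c * x)) / hh - c) with 0.
  rewrite Rabs_R0; auto. field; auto.
Qed.

Lemma dpl_aff (F : R -> R) F' a c x : derivable_pt_lim F (a + c * x) F' ->
  derivable_pt_lim (fun y => F (a + c * y)) x (F' * c).
Proof.
  intros H. apply (derivable_pt_lim_comp (fun y => a + c * y) F x c F'); auto.
  apply dpl_lin.
Qed.

Lemma dpl_ext (f g : R -> R) x l : (forall y, f y = g y) -> derivable_pt_lim g x l -> derivable_pt_lim f x l.
Proof. intros E H. apply dpl_loc with g 1; auto; lra. Qed.

Lemma dpl_plusp a s x : 0 < a + 2 * x ->
  derivable_pt_lim (fun y => Rpower (a + 2 * y) s) x (s * Rpower (a + 2 * x) (s - 1) * 2).
Proof. intros H. apply (dpl_aff (fun u => Rpower u s)). apply derivable_pt_lim_power; auto. Qed.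

Lemma dpl_minusp a s x : 0 < a - 2 * x ->
  derivable_pt_lim (fun y => Rpower (a - 2 * y) s) x (s * Rpower (a - 2 * x) (s - 1) * (-2)).
Proof.
  intros H. apply dpl_ext with (fun y => Rpower (a + (-2) * y) s).
  intros; f_equal; ring.
  apply (dpl_aff (fun u => Rpower u s)). replace (a + -2 * x) with (a - 2 * x) by ring. apply derivable_pt_lim_power; auto.
Qed.

Lemma dpl_plusr a s x : 0 < a + 2 * x ->
  derivable_pt_lim (fun y => rpow (a + 2 * y) s) x (s * Rpower (a + 2 * x) (s - 1) * 2).
Proof. intros H. apply (dpl_aff (fun u => rpow u s)). apply dpl_rpow; auto. Qed.

Lemma dpl_minusr a s x : 0 < a - 2 * x ->
  derivable_pt_lim (fun y => rpow (a - 2 * y) s) x (s * Rpower (a - 2 * x) (s - 1) * (-2)).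
Proof.
  intros H. apply dpl_ext with (fun y => rpow (a + (-2) * y) s).
  intros; f_equal; ring.
  apply (dpl_aff (fun u => rpow u s)). replace (a + -2 * x) with (a - 2 * x) by ring. apply dpl_rpow; auto.
Qed.

Definition WW a s (e : R) := Rpower (a + 2 * e) s + Rpower (a - 2 * e) s.
Definition DD a p (e : R) := Rpower (a + 2 * e) p - Rpower (a - 2 * e) p.
Definition fF a m (x : R) := rpow (a - 2 * x) m + rpow (a + 2 * x) m.
Definition QQ a m (x : R) := m * DD a (m - 1) x / x.

Lemma dpl_W a s x : 0 < a - 2 * x -> 0 < a + 2 * x ->
  derivable_pt_lim (WW a s) x (2 * s * DD a (s - 1) x).
Proof.
  intros H1 H2. unfold WW, DD.
  replace (2 * s * (Rpower (a + 2 * x) (s - 1) - Rpower (a - 2 * x) (s - 1))) with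
    (s * Rpower (a + 2 * x) (s - 1) * 2 + s * Rpower (a - 2 * x) (s - 1) * (-2)) by ring.
  apply (derivable_pt_lim_plus (fun y => Rpower (a + 2 * y) s) (fun y => Rpower (a - 2 * y) s)).
  apply dpl_plusp; auto. apply dpl_minusp; auto.
Qed.

Lemma dpl_D a p x : 0 < a - 2 * x -> 0 < a + 2 * x ->
  derivable_pt_lim (DD a p) x (2 * p * WW a (p - 1) x).
Proof.
  intros H1 H2. unfold WW, DD.
  replace (2 * p * (Rpower (a + 2 * x) (p - 1) + Rpower (a - 2 * x) (p - 1))) with
    (p * Rpower (a + 2 * x) (p - 1) * 2 - p * Rpower (a - 2 * x) (p - 1) * (-2)) by ring.
  apply (derivable_pt_lim_minus (fun y => Rpower (a + 2 * y) p) (fun y => Rpower (a - 2 * y) p)).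
  apply dpl_plusp; auto. apply dpl_minusp; auto.
Qed.

Lemma dpl_f a m x : 0 < a - 2 * x -> 0 < a + 2 * x ->
  derivable_pt_lim (fF a m) x (2 * m * DD a (m - 1) x).
Proof.
  intros H1 H2. unfold fF, DD.
  replace (2 * m * (Rpower (a + 2 * x) (m - 1) - Rpower (a - 2 * x) (m - 1))) with
    (m * Rpower (a - 2 * x) (m - 1) * (-2) + m * Rpower (a + 2 * x) (m - 1) * 2) by ring.
  apply (derivable_pt_lim_plus (fun y => rpow (a - 2 * y) m) (fun y => rpow (a + 2 * y) m)).
  apply dpl_minusr; auto. apply dpl_plusr; auto.
Qed.

Lemma dpl_cont f x l : derivable_pt_lim f x l -> continuity_pt f x.
Proof. intros H. apply derivable_continuous_pt. exists l. exact H. Qed.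

Lemma W_mono a s e1 e2 : 0 <= e1 < e2 -> 0 < a - 2 * e2 -> s <> 0 -> s <> 1 ->
  0 < s * (s - 1) * (WW a s e2 - WW a s e1).
Proof.
  intros [H0 H12] Ha Hs0 Hs1.
  destruct (mvt1 (WW a s) (fun e => 2 * s * DD a (s - 1) e) e1 e2 H12) as [t [Ht E]].
  - intros c Hc. apply dpl_W; lra.
  - apply dpl_cont with (2 * s * DD a (s - 1) e1). apply dpl_W; lra.
  - apply dpl_cont with (2 * s * DD a (s - 1) e2). apply dpl_W; lra.
  - cbv beta in E. rewrite E. unfold DD.
    assert (Hp := pow_diff_sign (a + 2 * t) (a - 2 * t) (s - 1) ltac:(lra) ltac:(lra) ltac:(lra)).
    assert (0 < s * s) by (apply Rsqr_pos_lt; auto).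
    replace (s * (s - 1) * (2 * s * (Rpower (a + 2 * t) (s - 1) - Rpower (a - 2 * t) (s - 1)) * (e2 - e1)))
      with (2 * (s * s) * (e2 - e1) * ((s - 1) * (Rpower (a + 2 * t) (s - 1) - Rpower (a - 2 * t) (s - 1)))) by ring.
    apply Rmult_lt_0_compat; auto. apply Rmult_lt_0_compat; lra.
Qed.

Lemma DD0 a p : DD a p 0 = 0.
Proof. unfold DD. replace (a + 2 * 0) with (a - 2 * 0) by ring. ring. Qed.

Lemma D_mono a p x1 x2 : 0 < x1 < x2 -> 0 < a - 2 * x2 -> p <> 0 -> p <> 1 -> p <> 2 ->
  0 < p * (p - 1) * (p - 2) * (x1 * DD a p x2 - x2 * DD a p x1).
Proof.
  intros [H0 H12] Ha Hp0 Hp1 Hp2.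
  destruct (mvt1 (DD a p) (fun e => 2 * p * WW a (p - 1) e) 0 x1 H0) as [t1 [Ht1 E1]].
  - intros c Hc. apply dpl_D; lra.
  - apply dpl_cont with (2 * p * WW a (p - 1) 0). apply dpl_D; lra.
  - apply dpl_cont with (2 * p * WW a (p - 1) x1). apply dpl_D; lra.
  - destruct (mvt1 (DD a p) (fun e => 2 * p * WW a (p - 1) e) x1 x2 H12) as [t2 [Ht2 E2]].
    + intros c Hc. apply dpl_D; lra.
    + apply dpl_cont with (2 * p * WW a (p - 1) x1). apply dpl_D; lra.
    + apply dpl_cont with (2 * p * WW a (p - 1) x2). apply dpl_D; lra.
    + cbv beta in E1, E2. rewrite DD0 in E1.
      assert (HW := W_mono a (p - 1) t1 t2 ltac:(lra) ltac:(lra) ltac:(lra) ltac:(lra)).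
      replace (DD a p x2) with (DD a p x1 + 2 * p * WW a (p - 1) t2 * (x2 - x1)) by lra.
      replace (DD a p x1) with (2 * p * WW a (p - 1) t1 * (x1 - 0)) by lra.
      assert (0 < p * p) by (apply Rsqr_pos_lt; auto).
      replace (p * (p - 1) * (p - 2) * (x1 * (2 * p * WW a (p - 1) t1 * (x1 - 0) + 2 * p * WW a (p - 1) t2 * (x2 - x1)) -
        x2 * (2 * p * WW a (p - 1) t1 * (x1 - 0)))) with
        (2 * (p * p) * x1 * (x2 - x1) * ((p - 1) * (p - 1 - 1) * (WW a (p - 1) t2 - WW a (p - 1) t1))) by ring.
      apply Rmult_lt_0_compat; [|exact HW].
      apply Rmult_lt_0_compat; [apply Rmult_lt_0_compat; [apply Rmult_lt_0_compat|]|]; lra.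
Qed.

Lemma Q_mono a m x1 x2 : 0 < x1 < x2 -> 0 < a - 2 * x2 ->
  m * (m - 1) * (m - 2) * (m - 3) <> 0 ->
  m * (m - 1) * (m - 2) * (m - 3) * QQ a m x1 < m * (m - 1) * (m - 2) * (m - 3) * QQ a m x2.
Proof.
  intros Hx Ha HK.
  assert (m <> 0) by (intro; apply HK; subst; ring).
  assert (m - 1 <> 0) by (intro E; apply HK; rewrite E; ring).
  assert (m - 1 - 1 <> 0) by (intro E; apply HK; replace (m - 2) with (m - 1 - 1) by ring; rewrite E; ring).
  assert (m - 1 - 2 <> 0) by (intro E; apply HK; replace (m - 3) with (m - 1 - 2) by ring; rewrite E; ring).
  assert (HD := D_mono a (m - 1) x1 x2 Hx Ha ltac:(auto) ltac:(lra) ltac:(lra)).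
  unfold QQ. apply Rlt_0_minus.
  assert (0 < m * m) by (apply Rsqr_pos_lt; auto).
  replace (m * (m - 1) * (m - 2) * (m - 3) * (m * DD a (m - 1) x2 / x2) -
     m * (m - 1) * (m - 2) * (m - 3) * (m * DD a (m - 1) x1 / x1)) with
     ((m * m) * / (x1 * x2) * ((m - 1) * (m - 1 - 1) * (m - 1 - 2) *
       (x1 * DD a (m - 1) x2 - x2 * DD a (m - 1) x1))) by (field; lra).
  apply Rmult_lt_0_compat; [|exact HD]. apply Rmult_lt_0_compat; auto. apply Rinv_0_lt_compat. nra.
Qed.

Lemma f_mvt a m x1 x2 : 0 <= x1 < x2 -> 0 <= a - 2 * x2 ->
  continuity_pt (fF a m) x1 -> continuity_pt (fF a m) x2 ->
  exists t, x1 < t < x2 /\ fF a m x2 - fF a m x1 = (x2 * x2 - x1 * x1) * QQ a m t.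
Proof.
  intros [H0 H12] Ha C1 C2.
  destruct (cmvt (fF a m) (fun x => 2 * m * DD a (m - 1) x) (fun x => x * x) (fun x => 2 * x) x1 x2 H12)
    as [t [Ht E]]; auto.
  - intros c Hc. apply dpl_f; lra.
  - intros c Hc. replace (2 * c) with (1 * c + c * 1) by ring.
    apply (derivable_pt_lim_mult id id); apply derivable_pt_lim_id.
  - apply derivable_continuous_pt. apply (derivable_pt_mult id id); apply derivable_pt_id.
  - apply derivable_continuous_pt. apply (derivable_pt_mult id id); apply derivable_pt_id.
  - exists t. split; auto. unfold QQ.
    apply Rmult_eq_reg_r with (2 * t); [|lra].
    rewrite <- E. field. lra.
Qed.

Lemma f_cont_int a m x : 0 <= x -> 0 < a - 2 * x -> continuity_pt (fF a m) x.
Proof. intros. apply dpl_cont with (2 * m * DD a (m - 1) x). apply dpl_f; lra. Qed.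

Lemma tangent a m x0 x : 0 < x0 -> 0 <= x -> x <> x0 -> 0 < a - 2 * x0 -> 0 <= a - 2 * x ->
  continuity_pt (fF a m) x -> m * (m - 1) * (m - 2) * (m - 3) <> 0 ->
  m * (m - 1) * (m - 2) * (m - 3) * QQ a m x0 * (x * x - x0 * x0) <
  m * (m - 1) * (m - 2) * (m - 3) * (fF a m x - fF a m x0).
Proof.
  intros Hx0 Hx Hne Ha0 Ha Cx HK. set (K := m * (m - 1) * (m - 2) * (m - 3)) in *.
  assert (C0 := f_cont_int a m x0 ltac:(lra) Ha0).
  destruct (Rlt_or_le x0 x) as [Hlt|Hle].
  - destruct (f_mvt a m x0 x ltac:(lra) Ha C0 Cx) as [t [Ht E]].
    assert (HQ := Q_mono a m x0 t ltac:(lra) ltac:(lra) HK). fold K in HQ.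
    rewrite E. assert (0 < x * x - x0 * x0) by nra.
    replace (K * ((x * x - x0 * x0) * QQ a m t)) with ((x * x - x0 * x0) * (K * QQ a m t)) by ring.
    replace (K * QQ a m x0 * (x * x - x0 * x0)) with ((x * x - x0 * x0) * (K * QQ a m x0)) by ring.
    apply Rmult_lt_compat_l; auto.
  - assert (Hlt : x < x0) by lra.
    destruct (f_mvt a m x x0 ltac:(lra) ltac:(lra) Cx C0) as [t [Ht E]].
    assert (HQ := Q_mono a m t x0 ltac:(lra) ltac:(lra) HK). fold K in HQ.
    replace (fF a m x - fF a m x0) with (- (fF a m x0 - fF a m x)) by ring.
    rewrite E. assert (0 < x0 * x0 - x * x) by nra.
    replace (K * - ((x0 * x0 - x * x) * QQ a m t)) with (- ((x0 * x0 - x * x) * (K * QQ a m t))) by ring.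
    replace (K * QQ a m x0 * (x * x - x0 * x0)) with (- ((x0 * x0 - x * x) * (K * QQ a m x0))) by ring.
    apply Ropp_lt_contravar. apply Rmult_lt_compat_l; auto.
Qed.

Lemma chord a m x R : 0 < x < R -> 0 <= a - 2 * R -> continuity_pt (fF a m) R ->
  m * (m - 1) * (m - 2) * (m - 3) <> 0 ->
  m * (m - 1) * (m - 2) * (m - 3) * (fF a m x - fF a m 0) * (R * R) <
  m * (m - 1) * (m - 2) * (m - 3) * (fF a m R - fF a m 0) * (x * x).
Proof.
  intros Hx Ha CR HK. set (K := m * (m - 1) * (m - 2) * (m - 3)) in *.
  assert (C0 := f_cont_int a m 0 ltac:(lra) ltac:(lra)).
  assert (Cx := f_cont_int a m x ltac:(lra) ltac:(lra)).
  destruct (f_mvt a m 0 x ltac:(lra) ltac:(lra) C0 Cx) as [t1 [Ht1 E1]].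
  destruct (f_mvt a m x R ltac:(lra) ltac:(lra) Cx CR) as [t2 [Ht2 E2]].
  assert (HQ := Q_mono a m t1 t2 ltac:(lra) ltac:(lra) HK). fold K in HQ.
  replace (fF a m R - fF a m 0) with ((fF a m R - fF a m x) + (fF a m x - fF a m 0)) by ring.
  rewrite E1, E2. apply Rlt_0_minus.
  replace (K * ((R * R - x * x) * QQ a m t2 + (x * x - 0 * 0) * QQ a m t1) * (x * x) -
    K * ((x * x - 0 * 0) * QQ a m t1) * (R * R)) with
    ((x * x) * (R * R - x * x) * (K * QQ a m t2 - K * QQ a m t1)) by ring.
  apply Rmult_lt_0_compat. apply Rmult_lt_0_compat; nra. lra.
Qed.

Lemma f_cont a m x : 0 < a -> 0 <= x -> 0 <= a - 2 * x -> (0 < a - 2 * x \/ 0 < m) ->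
  continuity_pt (fF a m) x.
Proof.
  intros Ha0 Hx Ha [H|Hm]. apply f_cont_int; auto.
  destruct Ha as [Ha|Ha]. apply f_cont_int; auto.
  unfold fF. apply continuity_pt_plus.
  - apply (continuity_pt_comp (fun y => a - 2 * y) (fun u => rpow u m)).
    apply derivable_continuous_pt. exists (-2).
    apply dpl_ext with (fun y => a + (-2) * y). intros; ring. apply dpl_lin.
    rewrite <- Ha. apply cont_rpow0; auto.
  - apply (continuity_pt_comp (fun y => a + 2 * y) (fun u => rpow u m)).
    apply derivable_continuous_pt. exists 2. apply dpl_lin.
    apply dpl_cont with (m * Rpower (a + 2 * x) (m - 1)). apply dpl_rpow. cbv beta. lra.
Qed.

Lemma f_even a m x : fF a m (- x) = fF a m x.
Proof. unfold fF. replace (a - 2 * - x) with (a + 2 * x) by ring.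
  replace (a + 2 * - x) with (a - 2 * x) by ring. ring. Qed.

Lemma f_abs a m x : fF a m (Rabs x) = fF a m x.
Proof. unfold Rabs. destruct (Rcase_abs x); auto. apply f_even. Qed.

Lemma rsum_ext n f g : (forall i, (i < n)%nat -> f i = g i) -> rsum n f = rsum n g.
Proof. induction n; simpl; intros H; auto. rewrite IHn, H; auto; intros; apply H; lia. Qed.

Lemma rsum_plus n f g : rsum n (fun i => f i + g i) = rsum n f + rsum n g.
Proof. induction n; simpl; [ring|]. rewrite IHn; ring. Qed.

Lemma rsum_minus n f g : rsum n (fun i => f i - g i) = rsum n f - rsum n g.
Proof. induction n; simpl; [ring|]. rewrite IHn; ring. Qed.

Lemma rsum_scal n c f : rsum n (fun i => c * f i) = c * rsum n f.
Proof. induction n; simpl; [ring|]. rewrite IHn; ring. Qed.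

Lemma rsum_const n c : rsum n (fun _ => c) = INR n * c.
Proof. induction n; cbn [rsum]; [simpl; ring|]. rewrite IHn, S_INR; ring. Qed.

Lemma rsum_delta n j c : (j < n)%nat -> rsum n (fun i => if Nat.eq_dec i j then c else 0) = c.
Proof.
  induction n; intros H; [lia|]. simpl.
  destruct (Nat.eq_dec n j).
  - subst. rewrite (rsum_ext _ _ (fun _ => 0)). rewrite rsum_const; ring.
    intros i Hi. destruct (Nat.eq_dec i j); [lia|auto].
  - rewrite IHn by lia. ring.
Qed.

Lemma rsum_le n f g : (forall i, (i < n)%nat -> f i <= g i) -> rsum n f <= rsum n g.
Proof. induction n; simpl; intros H; [lra|]. apply Rplus_le_compat; auto. Qed.

Lemma rsum_lt n f g : (forall i, (i < n)%nat -> f i <= g i) ->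
  (exists j, (j < n)%nat /\ f j < g j) -> rsum n f < rsum n g.
Proof.
  induction n; simpl; intros H [j [Hj Hlt]]; [lia|].
  destruct (Nat.eq_dec j n).
  - subst. apply Rplus_le_lt_compat; auto. apply rsum_le; auto.
  - apply Rplus_lt_le_compat; auto. apply IHn; auto. exists j; split; auto; lia.
Qed.

Lemma rsum_ge1 n f j : (forall i, (i < n)%nat -> 0 <= f i) -> (j < n)%nat -> f j <= rsum n f.
Proof.
  induction n; simpl; intros H Hj; [lia|].
  assert (0 <= rsum n f) by (rewrite <- (Rmult_0_r (INR n)), <- rsum_const; apply rsum_le; auto).
  destruct (Nat.eq_dec j n). subst; lra.
  assert (f j <= rsum n f) by (apply IHn; auto; lia). specialize (H n ltac:(lia)). lra.
Qed.

Lemma rsum_ge2 n f i j : (forall k, (k < n)%nat -> 0 <= f k) -> (i < n)%nat -> (j < n)%nat -> i <> j ->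
  f i + f j <= rsum n f.
Proof.
  induction n; simpl; intros H Hi Hj Hij; [lia|].
  destruct (Nat.eq_dec j n).
  - subst. assert (f i <= rsum n f) by (apply rsum_ge1; auto; lia). lra.
  - destruct (Nat.eq_dec i n).
    + subst. assert (f j <= rsum n f) by (apply rsum_ge1; auto; lia). lra.
    + assert (f i + f j <= rsum n f) by (apply IHn; auto; lia). specialize (H n ltac:(lia)). lra.
Qed.

Lemma rsum_zero n f : (forall i, (i < n)%nat -> f i = 0) -> rsum n f = 0.
Proof. intros H. rewrite (rsum_ext _ _ (fun _ => 0)) by auto. rewrite rsum_const; ring. Qed.

Lemma rsum_two n f : (2 <= n)%nat -> (forall i, (2 <= i)%nat -> f i = 0) -> rsum n f = f 0%nat + f 1%nat.
Proof.
  induction n; intros Hn H; [lia|]. destruct (Nat.eq_dec n 1).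
  - subst. simpl. ring.
  - cbn [rsum]. rewrite IHn; [| lia | exact H]. rewrite (H n) by lia. ring.
Qed.

Lemma dist2_vertex n M j s : (j < n)%nat ->
  dist2 n M (vertex j s) = rsum n (fun i => M i ^ 2) - 2 * s * M j + s ^ 2.
Proof.
  intros Hj. unfold dist2.
  rewrite (rsum_ext _ _ (fun i => M i ^ 2 + (if Nat.eq_dec i j then s ^ 2 - 2 * s * M j else 0))).
  rewrite rsum_plus, rsum_delta by auto. ring.
  intros i Hi. unfold vertex. destruct (Nat.eq_dec i j). subst; ring. ring.
Qed.

Lemma Cn_f n r h lam M : on_sphere n r M ->
  Cn n h lam M = rsum n (fun j => fF (r ^ 2 + 1 + h) (lam / 2) (M j)).
Proof.
  intros HM. unfold Cn. apply rsum_ext. intros j Hj.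
  rewrite !dist2_vertex by auto. unfold on_sphere in HM. rewrite HM. unfold fF.
  f_equal; f_equal; ring.
Qed.
From Stdlib Require Import Classical.

Lemma sq_le_r n r N j : 0 < r -> on_sphere n r N -> (j < n)%nat -> Rabs (N j) <= r.
Proof.
  intros Hr HN Hj. unfold on_sphere in HN.
  assert (N j ^ 2 <= r ^ 2). rewrite <- HN. apply (rsum_ge1 n (fun i => N i ^ 2)); auto.
  intros; apply pow2_ge_0.
  rewrite <- (Rabs_pos_eq r) by lra. apply Rsqr_le_abs_0. unfold Rsqr. nra.
Qed.

Lemma base_sign n r h N j s : on_sphere n r N -> is_sign s -> (j < n)%nat ->
  dist2 n N (vertex j s) + h = (r ^ 2 + 1 + h) - 2 * (s * N j).
Proof.
  intros HN Hs Hj. rewrite dist2_vertex by auto. rewrite HN.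
  destruct Hs; subst; ring.
Qed.

Lemma a_bound r h : 0 <= h -> 0 <= (r ^ 2 + 1 + h) - 2 * r.
Proof. intros. replace (r ^ 2 + 1 + h - 2 * r) with ((r - 1) * (r - 1) + h) by ring. pose proof (Rle_0_sqr (r - 1)). unfold Rsqr in *. lra. Qed.

Lemma abs_sign_bound a s x : is_sign s -> a - 2 * Rabs x <= a - 2 * (s * x).
Proof.
  intros [-> | ->]. assert (x <= Rabs x) by apply Rle_abs. lra.
  assert (- x <= Rabs x) by (rewrite <- Rabs_Ropp; apply Rle_abs). lra.
Qed.

Lemma x0_facts n r : (2 <= n)%nat -> 0 < r ->
  0 < r / sqrt (INR n) /\ r / sqrt (INR n) < r /\
  r / sqrt (INR n) * (r / sqrt (INR n)) * INR n = r * r.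
Proof.
  intros Hn Hr. assert (H2 : 2 <= INR n) by (replace 2 with (INR 2) by (simpl; ring); apply le_INR; auto).
  assert (Hs1 : 1 < sqrt (INR n)). rewrite <- sqrt_1. apply sqrt_lt_1; lra.
  repeat split.
  - apply Rdiv_lt_0_compat; lra.
  - apply Rmult_lt_reg_r with (sqrt (INR n)); [lra|]. unfold Rdiv.
    rewrite Rmult_assoc, Rinv_l by lra. nra.
  - assert (E := sqrt_sqrt (INR n) ltac:(lra)). set (s := sqrt (INR n)) in *. rewrite <- E. field. lra.
Qed.

Section Sums.
Variables (n : nat) (r h lam : R).
Hypotheses (Hn : (2 <= n)%nat) (Hr : 0 < r) (Hh : 0 <= h).
Let a := r ^ 2 + 1 + h.
Let m := lam / 2.
Let K := m * (m - 1) * (m - 2) * (m - 3).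
Let x0 := r / sqrt (INR n).
Let f := fF a m.

Lemma sum_tangent N : on_sphere n r N -> K <> 0 ->
  (forall j, (j < n)%nat -> continuity_pt f (Rabs (N j))) ->
  0 <= K * (rsum n (fun j => f (N j)) - INR n * f x0) /\
  (~ inD n r N -> 0 < K * (rsum n (fun j => f (N j)) - INR n * f x0)).
Proof.
  intros HN HK HC. destruct (x0_facts n r Hn Hr) as [Hx0 [Hx0r Hx0n]]. fold x0 in Hx0, Hx0r, Hx0n.
  assert (Ha0 : 0 < a - 2 * x0) by (assert (H := a_bound r h Hh); unfold a; lra).
  set (g := fun j => K * QQ a m x0 * (N j * N j - x0 * x0)).
  assert (Hg : rsum n g = 0).
  { unfold g. rewrite rsum_scal, rsum_minus, rsum_const.
    replace (rsum n (fun i => N i * N i)) with (r * r). rewrite <- Hx0n. ring.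
    unfold on_sphere in HN. transitivity (r ^ 2). simpl; ring.
    rewrite <- HN. apply rsum_ext. intros; simpl; ring. }
  assert (Hpt : forall j, (j < n)%nat -> g j <= K * (f (N j) - f x0) /\
     (Rabs (N j) <> x0 -> g j < K * (f (N j) - f x0))).
  { intros j Hj. unfold g.
    assert (Hlt : Rabs (N j) <> x0 -> g j < K * (f (N j) - f x0)).
    { intros Hne. unfold g. unfold f. rewrite <- (f_abs a m (N j)).
      replace (N j * N j) with (Rabs (N j) * Rabs (N j)) by (rewrite <- Rabs_mult; apply Rabs_pos_eq; nra).
      apply tangent; auto. apply Rabs_pos.
      assert (H := a_bound r h Hh). assert (H' := sq_le_r n r N j Hr HN Hj). unfold a; lra. }
    split; auto. destruct (Req_dec (Rabs (N j)) x0) as [E|E]; [|left; auto].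
    right. unfold f. rewrite <- (f_abs a m (N j)), E.
    replace (N j * N j) with (Rabs (N j) * Rabs (N j)) by (rewrite <- Rabs_mult; apply Rabs_pos_eq; nra).
    rewrite E. ring. }
  replace (K * (rsum n (fun j => f (N j)) - INR n * f x0)) with (rsum n (fun j => K * (f (N j) - f x0))).
  2:{ rewrite rsum_scal, rsum_minus, rsum_const. ring. }
  split.
  - rewrite <- Hg. apply rsum_le. intros; apply Hpt; auto.
  - intros HD. rewrite <- Hg. apply rsum_lt. intros; apply Hpt; auto.
    apply NNPP. intros Hno. apply HD.
    assert (Hall : forall j, (j < n)%nat -> Rabs (N j) = x0).
    { intros j Hj. apply NNPP. intros Hne. apply Hno. exists j. split; auto. apply Hpt; auto. }
    exists (fun i => N i / x0). split.
    + intros i Hi. specialize (Hall i Hi). unfold Rabs in Hall. unfold is_sign.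
      destruct (Rcase_abs (N i)); [right|left]; rewrite <- Hall; field; lra.
    + intros i Hi. fold x0. field. lra.
Qed.

Lemma notE_ex N : on_sphere n r N -> ~ inE n r N ->
  exists j, (j < n)%nat /\ 0 < Rabs (N j) < r.
Proof.
  intros HN HE. apply NNPP. intros Hno. apply HE.
  assert (Hall : forall j, (j < n)%nat -> N j = 0 \/ Rabs (N j) = r).
  { intros j Hj. assert (H1 := sq_le_r n r N j Hr HN Hj). assert (H2 := Rabs_pos (N j)).
    destruct (Req_dec (N j) 0) as [E|E]; [left; auto|right].
    assert (0 < Rabs (N j)) by (apply Rabs_pos_lt; auto).
    destruct H1 as [H1|H1]; auto. exfalso. apply Hno. exists j. split; auto. }
  assert (Hsq : forall j, (j < n)%nat -> N j ^ 2 = Rabs (N j) * Rabs (N j)).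
  { intros. rewrite <- Rabs_mult. rewrite Rabs_pos_eq. ring. nra. }
  assert (Hex : exists j, (j < n)%nat /\ Rabs (N j) = r).
  { apply NNPP. intros Hno2. unfold on_sphere in HN.
    rewrite rsum_zero in HN. assert (0 < r ^ 2) by (simpl; nra). lra.
    intros i Hi. destruct (Hall i Hi) as [E|E]. rewrite E; ring.
    exfalso; apply Hno2; exists i; auto. }
  destruct Hex as [j [Hj Ej]].
  exists j, (N j / r). split; auto. split.
  - unfold is_sign. unfold Rabs in Ej. destruct (Rcase_abs (N j)); [right|left]; rewrite <- Ej; field; lra.
  - intros i Hi. unfold vertex. destruct (Nat.eq_dec i j).
    + subst. field. lra.
    + rewrite Rmult_0_r. destruct (Hall i Hi) as [E|E]; auto. exfalso.
      assert (HH := rsum_ge2 n (fun k => N k ^ 2) i j ltac:(intros; apply pow2_ge_0) Hi Hj n0).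
      cbv beta in HH. unfold on_sphere in HN. rewrite HN, !Hsq, E, Ej in HH by auto. simpl in HH. nra.
Qed.

Lemma sum_chord N : on_sphere n r N -> K <> 0 -> continuity_pt f r ->
  K * (rsum n (fun j => f (N j)) - (INR n * f 0 + (f r - f 0))) <= 0 /\
  (~ inE n r N -> K * (rsum n (fun j => f (N j)) - (INR n * f 0 + (f r - f 0))) < 0).
Proof.
  intros HN HK HC.
  assert (Ha := a_bound r h Hh).
  assert (Hpt : forall j, (j < n)%nat -> K * (f (N j) - f 0) * (r * r) <= K * (f r - f 0) * (N j * N j) /\
     (0 < Rabs (N j) < r -> K * (f (N j) - f 0) * (r * r) < K * (f r - f 0) * (N j * N j))).
  { intros j Hj.
    assert (Hsq : N j * N j = Rabs (N j) * Rabs (N j)) by (rewrite <- Rabs_mult; rewrite Rabs_pos_eq; nra).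
    assert (Hlt : 0 < Rabs (N j) < r -> K * (f (N j) - f 0) * (r * r) < K * (f r - f 0) * (N j * N j)).
    { intros Hb. unfold f. rewrite <- (f_abs a m (N j)), Hsq. apply chord; auto. }
    split; auto. assert (H1 := sq_le_r n r N j Hr HN Hj).
    destruct (Req_dec (N j) 0) as [E|E].
    - rewrite E. right. ring.
    - destruct H1 as [H1|H1]. left. apply Hlt. split; auto. apply Rabs_pos_lt; auto.
      right. unfold f. rewrite <- (f_abs a m (N j)), Hsq, H1. ring. }
  assert (Hsum : rsum n (fun j => K * (f (N j) - f 0) * (r * r)) =
      K * (rsum n (fun j => f (N j)) - INR n * f 0) * (r * r)).
  { rewrite (rsum_ext _ _ (fun j => (K * (r * r)) * (f (N j) - f 0))) by (intros; ring).
    rewrite rsum_scal, rsum_minus, rsum_const. ring. }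
  assert (Hsum2 : rsum n (fun j => K * (f r - f 0) * (N j * N j)) = K * (f r - f 0) * (r * r)).
  { rewrite rsum_scal. f_equal. transitivity (r ^ 2). unfold on_sphere in HN. rewrite <- HN.
    apply rsum_ext; intros; simpl; ring. simpl; ring. }
  assert (0 < r * r) by nra.
  split.
  - assert (HS := rsum_le n _ _ (fun j Hj => proj1 (Hpt j Hj))). rewrite Hsum, Hsum2 in HS.
    apply Rmult_le_reg_r with (r * r); auto. nra.
  - intros HE. destruct (notE_ex N HN HE) as [j [Hj Hb]].
    assert (HS := rsum_lt n _ _ (fun j Hj => proj1 (Hpt j Hj))
       (ex_intro _ j (conj Hj (proj2 (Hpt j Hj) Hb)))). rewrite Hsum, Hsum2 in HS.
    apply Rmult_lt_reg_r with (r * r); auto. nra.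
Qed.

Lemma D_sphere M : inD n r M -> on_sphere n r M.
Proof.
  intros [eps [He HM]]. destruct (x0_facts n r Hn Hr) as [_ [_ Hx]]. unfold on_sphere.
  rewrite (rsum_ext _ _ (fun _ => x0 * x0)). rewrite rsum_const. fold x0 in Hx. simpl. lra.
  intros i Hi. rewrite HM by auto. fold x0. destruct (He i Hi) as [-> | ->]; ring.
Qed.

Lemma E_sphere M : inE n r M -> on_sphere n r M.
Proof.
  intros [j [s [Hj [Hs HM]]]]. unfold on_sphere.
  rewrite (rsum_ext _ _ (fun i => 0 + (if Nat.eq_dec i j then r ^ 2 else 0))).
  rewrite rsum_plus, rsum_delta, rsum_zero; auto. ring.
  intros i Hi. rewrite HM by auto. unfold vertex. destruct (Nat.eq_dec i j).
  destruct Hs as [-> | ->]; ring. ring.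
Qed.

Lemma D_val M : inD n r M -> rsum n (fun j => f (M j)) = INR n * f x0.
Proof.
  intros [eps [He HM]]. rewrite <- rsum_const. apply rsum_ext. intros i Hi.
  rewrite HM by auto. fold x0. destruct (He i Hi) as [-> | ->].
  rewrite Rmult_1_r; auto. unfold f. rewrite <- f_even. f_equal; ring.
Qed.

Lemma E_val M : inE n r M -> rsum n (fun j => f (M j)) = INR n * f 0 + (f r - f 0).
Proof.
  intros [j [s [Hj [Hs HM]]]].
  rewrite (rsum_ext _ _ (fun i => f 0 + (if Nat.eq_dec i j then f r - f 0 else 0))).
  rewrite rsum_plus, rsum_delta, rsum_const; auto.
  intros i Hi. rewrite HM by auto. unfold vertex. destruct (Nat.eq_dec i j).
  destruct Hs as [-> | ->]. rewrite Rmult_1_r; ring. unfold f. rewrite <- (f_even a m (r * -1)).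
  replace (- (r * -1)) with r by ring. ring. rewrite Rmult_0_r; ring.
Qed.

Lemma D_finite M : inD n r M -> forall j s, (j < n)%nat -> is_sign s -> 0 < dist2 n M (vertex j s) + h.
Proof.
  intros HD j s Hj Hs. assert (HS := D_sphere M HD). rewrite (base_sign n r h M j s HS Hs Hj).
  destruct HD as [eps [He HM]]. destruct (x0_facts n r Hn Hr) as [Hx0 [Hx0r _]].
  assert (H := abs_sign_bound (r ^ 2 + 1 + h) s (M j) Hs).
  assert (Rabs (M j) = r / sqrt (INR n)).
  { rewrite HM by auto. destruct (He j Hj) as [-> | ->]. rewrite Rmult_1_r. apply Rabs_pos_eq; lra.
    rewrite Rabs_mult, (Rabs_pos_eq (r / sqrt (INR n))) by lra. rewrite (Rabs_left (-1)) by lra. ring. }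
  assert (Ha := a_bound r h Hh). lra.
Qed.

End Sums.

Section Main.
Variables (n : nat) (r h lam : R).
Hypotheses (Hn : (2 <= n)%nat) (Hr : 0 < r) (Hh : 0 <= h).
Let a := r ^ 2 + 1 + h.
Let m := lam / 2.
Let K := m * (m - 1) * (m - 2) * (m - 3).
Let x0 := r / sqrt (INR n).
Let f := fF a m.

Lemma fin_neg N : on_sphere n r N -> lam < 0 -> C_finite n h lam N ->
  forall j, (j < n)%nat -> 0 < a - 2 * Rabs (N j).
Proof.
  intros HN Hl [H|H] j Hj; [lra|].
  unfold Rabs. destruct (Rcase_abs (N j)).
  - assert (E := base_sign n r h N j (-1) HN (or_intror eq_refl) Hj). specialize (H j (-1) Hj (or_intror eq_refl)).
    unfold a. lra.
  - assert (E := base_sign n r h N j 1 HN (or_introl eq_refl) Hj). specialize (H j 1 Hj (or_introl eq_refl)).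
    unfold a. lra.
Qed.

Lemma cont_abs N j : on_sphere n r N -> (j < n)%nat -> (0 < a - 2 * Rabs (N j) \/ 0 < m) ->
  continuity_pt f (Rabs (N j)).
Proof.
  intros HN Hj Hc. assert (H1 := sq_le_r n r N j Hr HN Hj). assert (Ha := a_bound r h Hh).
  unfold f; apply f_cont; auto. unfold a; simpl; nra. apply Rabs_pos. unfold a; lra.
Qed.

Hypothesis Hcont : forall N, on_sphere n r N -> C_finite n h lam N ->
  forall j, (j < n)%nat -> continuity_pt f (Rabs (N j)).

Lemma min_D : 0 < K -> min_exactly_at n r h lam (inD n r).
Proof.
  intros HK M HM. split. right. exact (D_finite n r h Hn Hr Hh M HM).
  intros N HN HF. rewrite (Cn_f n r h lam M (D_sphere n r Hn Hr M HM)), (Cn_f n r h lam N HN).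
  rewrite (D_val n r h lam M HM).
  destruct (sum_tangent n r h lam Hn Hr Hh N HN ltac:(fold m K; lra) (Hcont N HN HF)) as [H1 H2].
  fold a m K x0 f in H1, H2 |- *. split.
  - apply Rmult_le_reg_l with K; auto. lra.
  - intros HD. specialize (H2 HD). apply Rmult_lt_reg_l with K; auto. lra.
Qed.

Lemma max_D : K < 0 -> (forall N, on_sphere n r N -> C_finite n h lam N) ->
  max_exactly_at n r h lam (inD n r).
Proof.
  intros HK Hfin. split; auto. intros M HM N HN.
  rewrite (Cn_f n r h lam M (D_sphere n r Hn Hr M HM)), (Cn_f n r h lam N HN).
  rewrite (D_val n r h lam M HM).
  destruct (sum_tangent n r h lam Hn Hr Hh N HN ltac:(fold m K; lra) (Hcont N HN (Hfin N HN))) as [H1 H2].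
  fold a m K x0 f in H1, H2 |- *. split.
  - apply Rmult_le_reg_l with (- K); [lra|]. lra.
  - intros HD. specialize (H2 HD). apply Rmult_lt_reg_l with (- K); [lra|]. lra.
Qed.

End Main.

Section Main2.
Variables (n : nat) (r h lam : R).
Hypotheses (Hn : (2 <= n)%nat) (Hr : 0 < r) (Hh : 0 <= h).
Let a := r ^ 2 + 1 + h.
Let m := lam / 2.
Let K := m * (m - 1) * (m - 2) * (m - 3).
Let f := fF a m.
Hypothesis Hfin : forall N, on_sphere n r N -> C_finite n h lam N.
Hypothesis HcR : continuity_pt f r.

Lemma max_E : 0 < K -> max_exactly_at n r h lam (inE n r).
Proof.
  intros HK. split; auto. intros M HM N HN.
  rewrite (Cn_f n r h lam M (E_sphere n r M HM)), (Cn_f n r h lam N HN).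
  rewrite (E_val n r h lam M HM).
  destruct (sum_chord n r h lam Hr Hh N HN ltac:(fold m K; lra) HcR) as [H1 H2].
  fold a m K f in H1, H2 |- *. split.
  - apply Rmult_le_reg_l with K; auto. lra.
  - intros HD. specialize (H2 HD). apply Rmult_lt_reg_l with K; auto. lra.
Qed.

Lemma min_E : K < 0 -> min_exactly_at n r h lam (inE n r).
Proof.
  intros HK M HM. split. apply Hfin, E_sphere; auto.
  intros N HN _. rewrite (Cn_f n r h lam M (E_sphere n r M HM)), (Cn_f n r h lam N HN).
  rewrite (E_val n r h lam M HM).
  destruct (sum_chord n r h lam Hr Hh N HN ltac:(fold m K; lra) HcR) as [H1 H2].
  fold a m K f in H1, H2 |- *. split.
  - apply Rmult_le_reg_l with (- K); [lra|]. lra.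
  - intros HD. specialize (H2 HD). apply Rmult_lt_reg_l with (- K); [lra|]. lra.
Qed.
End Main2.

Lemma rpow_nonneg x y : 0 <= rpow x y.
Proof. unfold rpow, Rpower. destruct (Rlt_dec 0 x). left; apply exp_pos.
  destruct (Req_EM_T y 0); lra. Qed.

Lemma f_nonneg a m x : 0 <= fF a m x.
Proof. unfold fF. pose proof (rpow_nonneg (a - 2 * x) m). pose proof (rpow_nonneg (a + 2 * x) m). lra. Qed.

Lemma rpow_nat u k : 0 <= u -> rpow u (INR k) = u ^ k.
Proof.
  intros [Hu|Hu]. rewrite rpow_pos by auto. apply Rpower_pow; auto.
  subst. unfold rpow. destruct (Rlt_dec 0 0); [lra|]. destruct k.
  simpl. destruct (Req_EM_T 0 0); [auto|lra].
  destruct (Req_EM_T (INR (S k)) 0). exfalso; apply (not_0_INR (S k)); auto.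
  simpl. ring.
Qed.

Lemma K_neg_pos m : m < 0 -> 0 < m * (m - 1) * (m - 2) * (m - 3).
Proof. intros. replace (m * (m - 1) * (m - 2) * (m - 3)) with ((m * (m - 1)) * ((m - 2) * (m - 3))) by ring.
  apply Rmult_lt_0_compat; nra. Qed.
Lemma K_01 m : 0 < m < 1 -> m * (m - 1) * (m - 2) * (m - 3) < 0.
Proof. intros. replace (m * (m - 1) * (m - 2) * (m - 3)) with (- ((m * (1 - m)) * ((m - 2) * (m - 3)))) by ring.
  assert (0 < (m * (1 - m)) * ((m - 2) * (m - 3))) by (apply Rmult_lt_0_compat; nra). lra. Qed.
Lemma K_12 m : 1 < m < 2 -> 0 < m * (m - 1) * (m - 2) * (m - 3).
Proof. intros. replace (m * (m - 1) * (m - 2) * (m - 3)) with ((m * (m - 1)) * ((2 - m) * (3 - m))) by ring.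
  apply Rmult_lt_0_compat; nra. Qed.
Lemma K_23 m : 2 < m < 3 -> m * (m - 1) * (m - 2) * (m - 3) < 0.
Proof. intros. replace (m * (m - 1) * (m - 2) * (m - 3)) with (- ((m * (m - 1)) * ((m - 2) * (3 - m)))) by ring.
  assert (0 < (m * (m - 1)) * ((m - 2) * (3 - m))) by (apply Rmult_lt_0_compat; nra). lra. Qed.
Lemma K_3 m : 3 < m -> 0 < m * (m - 1) * (m - 2) * (m - 3).
Proof. intros. replace (m * (m - 1) * (m - 2) * (m - 3)) with ((m * (m - 1)) * ((m - 2) * (m - 3))) by ring.
  apply Rmult_lt_0_compat; nra. Qed.

Section Fin.
Variables (n : nat) (r h lam : R).
Hypotheses (Hn : (2 <= n)%nat) (Hr : 0 < r) (Hh : 0 <= h).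

Lemma fin_pos : 0 <= lam -> forall N, on_sphere n r N -> C_finite n h lam N.
Proof. intros; left; auto. Qed.

Lemma nondeg : ~ (h = 0 /\ r = 1) -> 0 < (r ^ 2 + 1 + h) - 2 * r.
Proof.
  intros Hnd. replace (r ^ 2 + 1 + h - 2 * r) with ((r - 1) * (r - 1) + h) by ring.
  destruct Hh as [Hh'|Hh']. pose proof (Rle_0_sqr (r - 1)); unfold Rsqr in *; lra.
  subst. assert (r <> 1) by tauto. assert (r - 1 <> 0) by lra.
  pose proof (Rsqr_pos_lt (r - 1) H0). unfold Rsqr in *; lra.
Qed.

Lemma fin_nondeg : ~ (h = 0 /\ r = 1) -> forall N, on_sphere n r N -> C_finite n h lam N.
Proof.
  intros Hnd N HN. right. intros j s Hj Hs. rewrite (base_sign n r h N j s HN Hs Hj).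
  assert (H1 := sq_le_r n r N j Hr HN Hj). assert (H2 := abs_sign_bound (r ^ 2 + 1 + h) s (N j) Hs).
  assert (H3 := nondeg Hnd). lra.
Qed.

Lemma contR : (0 < (r ^ 2 + 1 + h) - 2 * r \/ 0 < lam / 2) -> continuity_pt (fF (r ^ 2 + 1 + h) (lam / 2)) r.
Proof. intros Hc. assert (Ha := a_bound r h Hh). apply f_cont; auto; [simpl; nra|lra]. Qed.

Lemma Hcont_neg : lam < 0 -> forall N, on_sphere n r N -> C_finite n h lam N ->
  forall j, (j < n)%nat -> continuity_pt (fF (r ^ 2 + 1 + h) (lam / 2)) (Rabs (N j)).
Proof. intros Hl N HN HF j Hj. apply (cont_abs n r h lam Hr Hh N j HN Hj). left. apply (fin_neg n r h lam N HN Hl HF j Hj). Qed.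

Lemma Hcont_pos : 0 < lam -> forall N, on_sphere n r N -> C_finite n h lam N ->
  forall j, (j < n)%nat -> continuity_pt (fF (r ^ 2 + 1 + h) (lam / 2)) (Rabs (N j)).
Proof. intros Hl N HN HF j Hj. apply (cont_abs n r h lam Hr Hh N j HN Hj). right. lra. Qed.

Lemma unbounded : lam < 0 -> h = 0 -> r = 1 ->
  forall K0, exists M, on_sphere n r M /\ C_finite n h lam M /\ K0 < Cn n h lam M.
Proof.
  intros Hl H0 R1 K0. subst h r. set (m := lam / 2). assert (Hm : m < 0) by (unfold m; lra).
  set (b := Rabs K0 + 2). assert (Hb : 1 < b) by (unfold b; pose proof (Rabs_pos K0); lra).
  set (eps := Rpower b (/ m)).
  assert (He0 : 0 < eps) by (unfold eps, Rpower; apply exp_pos).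
  assert (He1 : eps < 1).
  { unfold eps, Rpower. rewrite <- exp_0. apply exp_increasing.
    assert (0 < ln b) by (rewrite <- ln_1; apply ln_increasing; lra).
    assert (/ m < 0) by (apply Rinv_lt_0_compat; auto). nra. }
  set (c := 1 - eps / 2). set (d := sqrt (1 - c * c)).
  assert (Hc : 0 < c < 1) by (unfold c; lra).
  assert (Hd0 : 0 <= d) by apply sqrt_pos.
  assert (Hd2 : d * d = 1 - c * c) by (apply sqrt_sqrt; nra).
  assert (Hd1 : d < 1) by nra.
  set (M := fun i : nat => match i with O => c | S O => d | _ => 0 end).
  assert (HM : on_sphere n 1 M).
  { unfold on_sphere. rewrite rsum_two; auto. simpl; nra.
    intros i Hi. destruct i as [|[|i]]; try lia. simpl; ring. }
  exists M. split; auto. split.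
  - right. intros j s Hj Hs. rewrite (base_sign n 1 0 M j s HM Hs Hj).
    assert (H2 := abs_sign_bound (1 ^ 2 + 1 + 0) s (M j) Hs).
    assert (Rabs (M j) < 1).
    { destruct j as [|[|j]]; simpl. rewrite Rabs_pos_eq; lra. rewrite Rabs_pos_eq; lra.
      rewrite Rabs_R0; lra. }
    simpl in *. lra.
  - rewrite (Cn_f n 1 0 lam M HM). fold m.
    apply Rlt_le_trans with (fF (1 ^ 2 + 1 + 0) m (M 0%nat)).
    + simpl M. unfold fF. pose proof (rpow_nonneg (1 ^ 2 + 1 + 0 + 2 * c) m).
      replace (1 ^ 2 + 1 + 0 - 2 * c) with eps by (unfold c; simpl; field).
      rewrite rpow_pos by auto. unfold eps. rewrite Rpower_mult, Rinv_l by lra.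
      rewrite Rpower_1 by lra. unfold b. pose proof (Rle_abs K0). lra.
    + apply (rsum_ge1 n (fun j => fF (1 ^ 2 + 1 + 0) m (M j))). intros; apply f_nonneg. lia.
Qed.

End Fin.

Lemma const_k n r h lam k al be : 0 < r -> 0 <= h -> lam / 2 = INR k ->
  (forall x, (r ^ 2 + 1 + h - 2 * x) ^ k + (r ^ 2 + 1 + h + 2 * x) ^ k = al + be * x ^ 2) ->
  constant_on_sphere n r h lam.
Proof.
  intros Hr Hh Hk Hp.
  assert (Hv : forall M, on_sphere n r M -> Cn n h lam M = INR n * al + be * r ^ 2).
  { intros M HM. rewrite (Cn_f n r h lam M HM).
    rewrite (rsum_ext _ _ (fun j => al + be * M j ^ 2)).
    rewrite rsum_plus, rsum_const, rsum_scal. rewrite HM. ring.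
    intros j Hj. rewrite <- Hp. unfold fF. rewrite Hk.
    assert (H1 := sq_le_r n r M j Hr HM Hj). assert (Ha := a_bound r h Hh).
    assert (H2 := abs_sign_bound (r ^ 2 + 1 + h) 1 (M j) (or_introl eq_refl)).
    assert (H3 := abs_sign_bound (r ^ 2 + 1 + h) (-1) (M j) (or_intror eq_refl)).
    rewrite !rpow_nat; auto; lra. }
  intros M N HM HN _ _. rewrite Hv, Hv; auto.
Qed.

Theorem theorem6p2 (n : nat) (r h : R) :
  (2 <= n)%nat -> 0 < r -> 0 <= h ->
  (* (1) lambda < 0 *)
  (forall lam, lam < 0 ->
     min_exactly_at n r h lam (inD n r) /\
     (~ (h = 0 /\ r = 1) -> max_exactly_at n r h lam (inE n r)) /\
     (h = 0 /\ r = 1 ->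
        forall K, exists M, on_sphere n r M /\ C_finite n h lam M /\ K < Cn n h lam M))
  /\
  (* (2) *)
  (forall lam, (lam = 0 \/ lam = 2 \/ lam = 4 \/ lam = 6) ->
     constant_on_sphere n r h lam) /\
  (forall lam, constant_on_sphere n r h lam ->
     lam = 0 \/ lam = 2 \/ lam = 4 \/ lam = 6) /\
  (forall lam, (0 < lam < 2 \/ 4 < lam < 6) ->
     max_exactly_at n r h lam (inD n r) /\ min_exactly_at n r h lam (inE n r)) /\
  (forall lam, 2 < lam < 4 ->
     min_exactly_at n r h lam (inD n r) /\ max_exactly_at n r h lam (inE n r))
  /\
  (* (3) lambda > 6 *)
  (forall lam, 6 < lam ->
     max_exactly_at n r h lam (inE n r) /\ min_exactly_at n r h lam (inD n r)).
Proof.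
  intros Hn Hr Hh.
  assert (Ha := a_bound r h Hh).
  split; [|split; [|split; [|split; [|split]]]].
  - intros lam Hl. split; [|split].
    + apply min_D; auto. apply Hcont_neg; auto. apply K_neg_pos; lra.
    + intros Hnd. apply max_E; auto. apply fin_nondeg; auto. apply contR; auto.
      left; apply nondeg; auto. apply K_neg_pos; lra.
    + intros [H0 H1]. apply unbounded; auto.
  - intros lam [E|[E|[E|E]]]; subst lam.
    + apply (const_k n r h 0 0 2 0); auto. simpl; field. intros; simpl; ring.
    + apply (const_k n r h 2 1 (2 * (r ^ 2 + 1 + h)) 0); auto. simpl; field. intros; simpl; ring.
    + apply (const_k n r h 4 2 (2 * (r ^ 2 + 1 + h) ^ 2) 8); auto. simpl; field. intros; simpl; ring.
    + apply (const_k n r h 6 3 (2 * (r ^ 2 + 1 + h) ^ 3) (24 * (r ^ 2 + 1 + h))); auto.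
      simpl; field. intros; simpl; ring.
  - intros lam Hc. apply NNPP. intros Hno.
    set (m := lam / 2) in *.
    assert (HK : m * (m - 1) * (m - 2) * (m - 3) <> 0).
    { intros E. apply Hno. repeat (apply Rmult_integral in E; destruct E as [E|E]); unfold m in E; lra. }
    destruct (x0_facts n r Hn Hr) as [Hx0 [Hx0r _]].
    set (MD := fun _ : nat => r / sqrt (INR n)).
    assert (HD : inD n r MD).
    { exists (fun _ => 1). split. intros; left; auto. intros i Hi. unfold MD. ring. }
    assert (HDs := D_sphere n r Hn Hr MD HD).
    assert (HDf : C_finite n h lam MD) by (right; exact (D_finite n r h Hn Hr Hh MD HD)).
    assert (HnE : ~ inE n r MD).
    { intros [j [s [Hj [Hs HM]]]].
      set (i := match j with O => 1%nat | _ => 0%nat end).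
      assert (Hi : (i < n)%nat) by (unfold i; destruct j; lia).
      assert (Hij : i <> j) by (unfold i; destruct j; lia).
      specialize (HM i Hi). unfold vertex, MD in HM. destruct (Nat.eq_dec i j); [lia|]. lra. }
    set (ME := fun i => r * vertex 0 1 i).
    assert (HE : inE n r ME).
    { exists 0%nat, 1. split; [lia|]. split; [left; auto|]. intros i Hi; auto. }
    assert (HEs := E_sphere n r ME HE).
    destruct (Rlt_or_le lam 0) as [Hl|Hl].
    + destruct (classic (h = 0 /\ r = 1)) as [Hdeg|Hnd].
      * destruct Hdeg as [H0 H1].
        destruct (unbounded n r h lam Hn Hr Hh Hl H0 H1 (Cn n h lam MD)) as [M [HM [HMf HMc]]].
        rewrite (Hc MD M HDs HM HDf HMf) in HMc. lra.
      * assert (Hfin := fin_nondeg n r h lam Hr Hh Hnd).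
        assert (Hmax := max_E n r h lam Hr Hh Hfin ltac:(apply contR; auto; left; apply nondeg; auto)
          ltac:(apply K_neg_pos; unfold m; lra)).
        destruct Hmax as [_ Hmax]. destruct (Hmax ME HE MD HDs) as [_ Hlt].
        specialize (Hlt HnE). rewrite (Hc MD ME HDs HEs HDf (Hfin ME HEs)) in Hlt. lra.
    + assert (Hl' : 0 < lam) by (destruct Hl; auto; exfalso; apply Hno; auto).
      assert (Hfin := fin_pos n r h lam ltac:(lra)).
      assert (HcR := contR r h lam Hr Hh ltac:(right; unfold m; lra)).
      destruct (Rlt_or_le 0 (m * (m - 1) * (m - 2) * (m - 3))) as [Kp|Kn].
      * destruct (max_E n r h lam Hr Hh Hfin HcR Kp) as [_ Hmax].
        destruct (Hmax ME HE MD HDs) as [_ Hlt].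
        specialize (Hlt HnE). rewrite (Hc MD ME HDs HEs HDf (Hfin ME HEs)) in Hlt. lra.
      * assert (Kn' : m * (m - 1) * (m - 2) * (m - 3) < 0) by lra.
        destruct (min_E n r h lam Hr Hh Hfin HcR Kn' ME HE) as [_ Hmin].
        destruct (Hmin MD HDs HDf) as [_ Hlt].
        specialize (Hlt HnE). rewrite (Hc MD ME HDs HEs HDf (Hfin ME HEs)) in Hlt. lra.
  - intros lam Hl. assert (Hfin := fin_pos n r h lam ltac:(lra)).
    assert (HcR := contR r h lam Hr Hh ltac:(right; lra)).
    assert (HK : lam / 2 * (lam / 2 - 1) * (lam / 2 - 2) * (lam / 2 - 3) < 0)
      by (destruct Hl; [apply K_01|apply K_23]; lra).
    split.
    + apply max_D; auto. apply Hcont_pos; auto; lra.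
    + apply min_E; auto.
  - intros lam Hl. assert (Hfin := fin_pos n r h lam ltac:(lra)).
    assert (HcR := contR r h lam Hr Hh ltac:(right; lra)).
    assert (HK : 0 < lam / 2 * (lam / 2 - 1) * (lam / 2 - 2) * (lam / 2 - 3)) by (apply K_12; lra).
    split.
    + apply min_D; auto. apply Hcont_pos; auto; lra.
    + apply max_E; auto.
  - intros lam Hl. assert (Hfin := fin_pos n r h lam ltac:(lra)).
    assert (HcR := contR r h lam Hr Hh ltac:(right; lra)).
    assert (HK : 0 < lam / 2 * (lam / 2 - 1) * (lam / 2 - 2) * (lam / 2 - 3)) by (apply K_3; lra).
    split.
    + apply max_E; auto.
    + apply min_D; auto. apply Hcont_pos; auto; lra.
Qed.
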